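(* Consider the sequentially observed MDP described in the context, and let $V^*_{t+1}\in\mathbb{R}^n$ be defined by the recursion in the context. Fix an epoch $t\in\{1,\dots,N-1\}$ and a state $i$. Let $H_i\in\mathbb{R}^{n\times m}$ have entries $H_i(j,k)=\big(r_t(i,a_k)+V^*_{t+1}(j)\big)G_i(j,k)$, and let $X_i^*\in\mathbb{R}^{n\times m}$ be an optimal solution of the linear program $$\max_{X_i\in\mathbb{R}^{n\times m}}\ \sum_{k=1}^m\sum_{j=1}^nH_i(j,k)X_i(j,k)$$ subject to, for $j=1,\dots,n$ and $k=1,\dots,m-1$, $0\le X_i(j,k)\le 1-\sum_{l=1}^{k-1}\sum_{s=1}^nG_i(s,l)X_i(s,l)$, and, for $j=1,\dots,n$, $X_i(j,m)=1-\sum_{l=1}^{m-1}\sum_{s=1}^nG_i(s,l)X_i(s,l)$. Let $z(1)=1$ and $z(k)=1-\sum_{l=1}^{k-1}\sum_{s=1}^nG_i(s,l)X_i^*(s,l)$ for $k=2,\dots,m$. Then $$V^*_t(i)=\mathrm{Tr}(H_i^TX_i^* ),$$ and the matrix $P^*_i(t)$ with entries $P^*_i(j,k,t)=X_i^*(j,k)/z(k)$ if $z(k)>0$ and $P^*_i(j,k,t)=1$ otherwise ($j=1,\dots,n$, $k=1,\dots,m$) attains the maximum defining $V^*_t(i)$, i.e. is an optimal decision at state $i$ and epoch $t$.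
   Context: States $S=\{1,\dots,n\}$; at every state the actions are $a_1,\dots,a_m$ (in this fixed order); decision epochs $t=1,\dots,N-1$, $N\ge 2$. For each epoch $t$, state $i$, action index $k$, $G_i(j,k)=G_i(j,k,t)\ge 0$ with $\sum_jG_i(j,k)=1$ is the probability that action $a_k$ in state $i$ leads to state $j$. Rewards $r_t(i,a_k)\in\mathbb{R}$ for $t\le N-1$ and terminal rewards $r_N(i)$, with vector $\mathbf{r}_N$. Model: at each epoch, in state $i$, for phases $k=1,\dots,m-1$ the agent observes the realized transition of action $a_k$ and accepts it (taking $a_k$) or rejects it; if $a_1,\dots,a_{m-1}$ are all rejected, $a_m$ is taken. Decision variables at epoch $t$: matrices $P_i(t)\in[0,1]^{n\times m}$ with entries $P_i(j,k)=P_i(j,k,t)$ (probability of accepting an observed transition to $j$ in state $i$, phase $k$), with $P_i(j,m)=1$ for all $j$; $\mathcal{C}$ is the set of all such matrices. Define $q_i(a_k)=\sum_jG_i(j,k)P_i(j,k)$; $p_i(a_k)=\big(\prod_{l=1}^{k-1}(1-q_i(a_l))\big)q_i(a_k)$ (empty product $=1$); $r_t(i)=\sum_{k=1}^mp_i(a_k)r_t(i,a_k)$; $M_t(j,i)=\sum_{k=1}^m\big(\prod_{l=1}^{k-1}(1-q_i(a_l))\big)G_i(j,k)P_i(j,k)$. The optimal values are defined recursively by $V^*_N(i)=r_N(i)$ and, for $t=N-1,\dots,1$, $V^*_t(i)=\max_{P_i(t)\in\mathcal{C}}\big\{r_t(i)+\sum_{j=1}^nM_t(j,i)V^*_{t+1}(j)\big\}$.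 *)

(* Defs.v *)
From HB Require Import structures.
From mathcomp Require Import all_boot all_order all_algebra.
From mathcomp Require Import all_classical all_reals.
Unset Printing Implicit Defensive.
Import Order.TTheory GRing.Theory Num.Theory.
Local Open Scope ring_scope.
Local Open Scope classical_set_scope.

(* States are 'I_n (state i+1 of the paper is i), actions are 'I_m
   (action a_{k+1} of the paper is k); the last action a_m is the k with k.+1 = m.
   Epochs t are natural numbers 1..N-1 as in the paper.
   G t i : 'M_(n,m) with (G t i) j k = G_i(j,k,t).
   r t i k = r_t(i,a_k), rN j = r_N(j). *)

Section Defs.
Variables (R : realType) (n m : nat).

Definition is_last (k : 'I_m) : bool := (k.+1 == m)%N.

Definition decision_set : set 'M[R]_(n, m) :=
  [set P | (forall j k, 0 <= P j k <= 1) /\ (forall j k, is_last k -> P j k = 1)].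

Variable Gi : 'M[R]_(n, m).

Definition qacc (P : 'M[R]_(n, m)) (k : 'I_m) : R := \sum_j Gi j k * P j k.

Definition surv (P : 'M[R]_(n, m)) (k : 'I_m) : R :=
  \prod_(l < m | (l < k)%N) (1 - qacc P l).

Definition pact (P : 'M[R]_(n, m)) (k : 'I_m) : R := surv P k * qacc P k.

Definition exp_reward (ri : 'I_m -> R) (P : 'M[R]_(n, m)) : R :=
  \sum_k pact P k * ri k.

Definition trans_prob (P : 'M[R]_(n, m)) (j : 'I_n) : R :=
  \sum_k surv P k * Gi j k * P j k.

Definition objective (ri : 'I_m -> R) (V : 'I_n -> R) (P : 'M[R]_(n, m)) : R :=
  exp_reward ri P + \sum_j trans_prob P j * V j.

Definition lp_mass (X : 'M[R]_(n, m)) (k : 'I_m) : R :=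
  1 - \sum_(l < m | (l < k)%N) \sum_s Gi s l * X s l.

Definition lp_feasible (X : 'M[R]_(n, m)) : Prop :=
  (forall j k, ~~ is_last k -> 0 <= X j k <= lp_mass X k) /\
  (forall j k, is_last k -> X j k = lp_mass X k).

Definition lp_obj (H X : 'M[R]_(n, m)) : R := \sum_k \sum_j H j k * X j k.

Definition lp_optimal (H X : 'M[R]_(n, m)) : Prop :=
  lp_feasible X /\ forall Y, lp_feasible Y -> lp_obj H Y <= lp_obj H X.

(* z(k) = lp_mass X k (z(1) = 1 since the sum is empty); recovered decision *)
Definition recover (X : 'M[R]_(n, m)) : 'M[R]_(n, m) :=
  \matrix_(j, k) (if 0 < lp_mass X k then X j k / lp_mass X k else 1).

End Defs.

Section Values.
Variables (R : realType) (n m N : nat).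
Variables (G : nat -> 'I_n -> 'M[R]_(n, m)) (r : nat -> 'I_n -> 'I_m -> R)
          (rN : 'I_n -> R).

(* values_from k = V^*_{N-k}; V^*_t(i) = max over C, written as the supremum
   (which is attained, see the theorem). *)
Fixpoint values_from (k : nat) : 'I_n -> R :=
  match k with
  | O => rN
  | k'.+1 => fun i =>
      sup [set objective R n m (G (N - k'.+1)%N i) (r (N - k'.+1)%N i) (values_from k') P
          | P in decision_set R n m]
  end.

Definition Vstar (t : nat) : 'I_n -> R := values_from (N - t).

End Values.

(* Main.v *)
Require Import Defs.
From HB Require Import structures.
From mathcomp Require Import all_boot all_order all_algebra.
From mathcomp Require Import all_classical all_reals.
From mathcomp Require Import ring lra zify.
Import Order.TTheory GRing.Theory Num.Theory.
Local Open Scope ring_scope.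
Local Open Scope classical_set_scope.


Section H.
Variables (R : realType) (n m : nat).

Lemma big_ltS (idx : R) (op : Monoid.com_law idx) (F : 'I_m -> R) k :
  \big[op/idx]_(l < m | (l < k.+1)%N) F l =
  op (\big[op/idx]_(l < m | (l < k)%N) F l) (\big[op/idx]_(l < m | val l == k) F l).
Proof.
rewrite (bigID (fun l : 'I_m => (l < k)%N)) /=; congr (op _ _); apply: eq_bigl => l.
  by case: (ltnP l k) => h //=; [rewrite ltnS ltnW | rewrite andbF].
by rewrite ltnS -leqNgt; apply/idP/idP; [case/andP=> a b; rewrite eqn_leq a b|move/eqP->; rewrite leqnn].
Qed.

Lemma big_val_eq (idx : R) (op : Monoid.com_law idx) (F : 'I_m -> R) k (hk : (k < m)%N) :
  \big[op/idx]_(l < m | val l == k) F l = F (Ordinal hk).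
Proof.
rewrite (big_pred1 (Ordinal hk)) // => l /=; apply/idP/eqP => [/eqP h|->//]; exact: val_inj.
Qed.

Lemma big_val_out (idx : R) (op : Monoid.com_law idx) (F : 'I_m -> R) k : (m <= k)%N ->
  \big[op/idx]_(l < m | val l == k) F l = idx.
Proof.
move=> h; rewrite big_pred0 // => l; apply/negbTE; apply/eqP => e.
by move: (ltn_ord l); rewrite e ltnNge h.
Qed.

Variables (Gi : 'M[R]_(n, m)).
Hypothesis hG0 : forall j k, 0 <= Gi j k.
Hypothesis hG1 : forall k, \sum_j Gi j k = 1.

Definition survn P (k : nat) := \prod_(l < m | (l < k)%N) (1 - qacc R n m Gi P l).
Definition Xof (P : 'M[R]_(n, m)) : 'M[R]_(n, m) :=
  \matrix_(j, k) (surv R n m Gi P k * P j k).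

Lemma telescope P k :
  \sum_(l < m | (l < k)%N) surv R n m Gi P l * qacc R n m Gi P l = 1 - survn P k.
Proof.
elim: k => [|k IH].
  by rewrite /survn !big_pred0 // subrr.
rewrite /survn !big_ltS -/(survn P k) IH.
case: (ltnP k m) => hk.
  rewrite !big_val_eq /surv /= -/(survn P k); ring.
by rewrite !big_val_out // /= addr0 mulr1.
Qed.

Lemma lp_mass_Xof P k : lp_mass R n m Gi (Xof P) k = surv R n m Gi P k.
Proof.
rewrite /lp_mass.
under eq_bigr => l _ do under eq_bigr => s _ do rewrite mxE.
rewrite (eq_bigr (fun l => surv R n m Gi P l * qacc R n m Gi P l)).
  by rewrite telescope opprB addrC subrK.
move=> l _; rewrite /qacc mulr_sumr; apply: eq_bigr => s _; ring.
Qed.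


Lemma exists_row (k : 'I_m) : exists j : 'I_n, true.
Proof.
have [j0 _|h] := pickP (fun _ : 'I_n => true); first by exists j0.
have e : \sum_j Gi j k = 0 by rewrite (eq_bigl xpred0) ?big_pred0 // => j; exact: h j.
by move: (hG1 k) (@oner_neq0 R); rewrite e => <-; rewrite eqxx.
Qed.

Lemma qacc_bounds P k : decision_set R n m P ->
  0 <= qacc R n m Gi P k <= 1.
Proof.
case=> hP _; rewrite /qacc; apply/andP; split.
  by apply: sumr_ge0 => j _; apply: mulr_ge0 => //; case/andP: (hP j k).
rewrite -(hG1 k); apply: ler_sum => j _.
case/andP: (hP j k) => a b; rewrite -[leRHS]mulr1; exact: ler_wpM2l.
Qed.

Lemma surv_ge0 P k : decision_set R n m P -> 0 <= surv R n m Gi P k.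
Proof.
move=> hP; apply: prodr_ge0 => l _; case/andP: (qacc_bounds P l hP) => _ b.
by rewrite subr_ge0.
Qed.

Lemma Xof_feasible P : decision_set R n m P -> lp_feasible R n m Gi (Xof P).
Proof.
move=> hP; have [hP1 hP2] := hP; split => j k.
  move=> _; rewrite lp_mass_Xof mxE; case/andP: (hP1 j k) => a b.
  have s0 := surv_ge0 P k hP.
  rewrite mulr_ge0 //=; rewrite -[leRHS]mulr1; exact: ler_wpM2l.
by move=> hk; rewrite lp_mass_Xof mxE hP2 // mulr1.
Qed.

Lemma objective_Xof (ri : 'I_m -> R) (V : 'I_n -> R) P :
  objective R n m Gi ri V P =
  lp_obj R n m (\matrix_(j, k) ((ri k + V j) * Gi j k)) (Xof P).
Proof.
rewrite /objective /exp_reward /trans_prob /lp_obj.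
under [RHS]eq_bigr => k _ do under eq_bigr => j _ do
  rewrite !mxE mulrDl mulrDl.
under [RHS]eq_bigr => k _ do rewrite big_split /=.
rewrite big_split /=; congr (_ + _).
  apply: eq_bigr => k _; rewrite /pact /qacc mulr_sumr mulr_suml.
  apply: eq_bigr => j _; ring.
rewrite exchange_big /=; apply: eq_bigr => j _; rewrite mulr_suml.
apply: eq_bigr => k _; ring.
Qed.

Lemma tr_lp_obj (H X : 'M[R]_(n, m)) : \tr (H^T *m X) = lp_obj R n m H X.
Proof.
rewrite /mxtrace /lp_obj; apply: eq_bigr => k _; rewrite mxE.
by apply: eq_bigr => j _; rewrite mxE.
Qed.


Lemma nonlast_mass_ge0 X k : lp_feasible R n m Gi X -> ~~ is_last m k ->
  0 <= lp_mass R n m Gi X k.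
Proof.
case=> h1 _ hk; have [j _] := exists_row k.
by case/andP: (h1 j k hk) => a b; exact: le_trans b.
Qed.

Lemma surv_recover X k (hk : (k < m)%N) : lp_feasible R n m Gi X ->
  survn (recover R n m Gi X) k = 1 - \sum_(l < m | (l < k)%N) \sum_s Gi s l * X s l.
Proof.
move=> hX; elim: k hk => [|k IH] hk.
  by rewrite /survn !big_pred0 // subr0.
have hk' : (k < m)%N by apply: ltnW.
rewrite /survn big_ltS -/(survn _ k) IH // big_ltS !big_val_eq.
set l0 := Ordinal hk'.
have hZ : lp_mass R n m Gi X l0 = 1 - \sum_(l < m | (l < k)%N) \sum_s Gi s l * X s l := erefl.
rewrite opprD addrA -hZ /qacc /recover.
under eq_bigr => j _ do rewrite mxE.
have nl : ~~ is_last m l0 by rewrite /is_last /= neq_ltn hk.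
have Z0 := nonlast_mass_ge0 X _ hX nl.
case: (boolP (0 < lp_mass R n m Gi X l0)) => hp.
  rewrite -[GRing.GRing_mul__canonical__Monoid_ComLaw R _ _]/(_ * _).
  under eq_bigr => j _ do rewrite mulrA.
  rewrite -mulr_suml; field; exact: lt0r_neq0.
have Ze : lp_mass R n m Gi X l0 = 0 by apply/eqP; rewrite eq_le Z0 andbT leNgt.
have Xe : forall s, X s l0 = 0.
  move=> s; case: hX => h1 _; case/andP: (h1 s l0 nl); rewrite Ze => a b.
  by apply/eqP; rewrite eq_le a b.
rewrite -[GRing.GRing_mul__canonical__Monoid_ComLaw R _ _]/(_ * _).
rewrite Ze mul0r big1 ?subr0 // => s _; by rewrite Xe mulr0.
Qed.

Lemma Xof_recover X : lp_feasible R n m Gi X -> Xof (recover R n m Gi X) = X.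
Proof.
move=> hX; apply/matrixP => j k; rewrite /recover !mxE.
have -> : surv R n m Gi (recover R n m Gi X) k = lp_mass R n m Gi X k.
  exact: (surv_recover X _ (ltn_ord k) hX).
case: ifP => hp; first by rewrite mulrC divfK // lt0r_neq0.
case: (boolP (is_last m k)) => hl.
  by case: hX => _ h2; rewrite mulr1 h2.
have Z0 := nonlast_mass_ge0 X _ hX hl.
have Ze : lp_mass R n m Gi X k = 0 by apply/eqP; rewrite eq_le Z0 andbT leNgt hp.
case: hX => h1 _; case/andP: (h1 j k hl); rewrite Ze mul0r => a b.
by apply/eqP; rewrite eq_le a b.
Qed.

Lemma recover_dec X : lp_feasible R n m Gi X -> decision_set R n m (recover R n m Gi X).
Proof.
move=> hX; split => j k; rewrite /recover mxE.
  case: ifP => hp; last by rewrite ler01 lexx.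
  case: (boolP (is_last m k)) => hl.
    by case: hX => _ h2; rewrite (h2 j k hl) divff ?lt0r_neq0 // ler01 lexx.
  case: hX => h1 _; case/andP: (h1 j k hl) => a b.
  by rewrite divr_ge0 ?(le_trans a b) //= ler_pdivrMr // mul1r.
move=> hl; case: ifP => // hp.
by case: hX => _ h2; rewrite (h2 j k hl) divff ?lt0r_neq0.
Qed.
End H.

Theorem proposition2 (R : realType) (n m N : nat)
  (G : nat -> 'I_n -> 'M[R]_(n, m)) (r : nat -> 'I_n -> 'I_m -> R)
  (rN : 'I_n -> R) :
  (0 < m)%N -> (2 <= N)%N ->
  (forall t i j k, (1 <= t <= N.-1)%N -> 0 <= G t i j k) ->
  (forall t i k, (1 <= t <= N.-1)%N -> \sum_j G t i j k = 1) ->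
  forall (t : nat) (i : 'I_n), (1 <= t <= N.-1)%N ->
  let V1 := Vstar R n m N G r rN t.+1 in
  let H : 'M[R]_(n, m) := \matrix_(j, k) ((r t i k + V1 j) * G t i j k) in
  forall Xs : 'M[R]_(n, m), lp_optimal R n m (G t i) H Xs ->
  let Ps := recover R n m (G t i) Xs in
  Vstar R n m N G r rN t i = \tr (H^T *m Xs) /\
  decision_set R n m Ps /\
  (forall P, decision_set R n m P ->
     objective R n m (G t i) (r t i) V1 P <= objective R n m (G t i) (r t i) V1 Ps) /\
  objective R n m (G t i) (r t i) V1 Ps = Vstar R n m N G r rN t i.

Proof.
move=> hm hN hG0 hG1 t i ht V1 H Xs [hXf hXopt] Ps.
have G0 : forall j k, 0 <= G t i j k by move=> j k; exact: hG0.
have G1 : forall k, \sum_j G t i j k = 1 by move=> k; exact: hG1.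
have key : forall P, decision_set R n m P ->
  objective R n m (G t i) (r t i) V1 P <= objective R n m (G t i) (r t i) V1 Ps.
  move=> P hP; rewrite !objective_Xof (Xof_recover R n m (G t i) G1 Xs hXf).
  exact: hXopt (Xof_feasible R n m (G t i) G0 G1 P hP).
have hV : Vstar R n m N G r rN t i = objective R n m (G t i) (r t i) V1 Ps.
  rewrite /Vstar.
  have e : (N - t = (N - t.+1).+1)%N by case/andP: ht => a b; lia.
  rewrite e /=.
  have e2 : (N - (N - t.+1).+1 = t)%N by case/andP: ht => a b; lia.
  rewrite e2; apply/le_anti/andP; split.
    apply: ge_sup; first by exists (objective R n m (G t i) (r t i) V1 Ps), Ps; first exact: (recover_dec R n m (G t i) Xs hXf).
    by move=> y [P hP <-]; exact: key.
  apply: ub_le_sup.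
    by exists (objective R n m (G t i) (r t i) V1 Ps) => y [P hP <-]; exact: key.
  by exists Ps => //; exact: (recover_dec R n m (G t i) Xs hXf).
split.
  by rewrite hV tr_lp_obj objective_Xof (Xof_recover R n m (G t i) G1 Xs hXf).
split; first exact: (recover_dec R n m (G t i) Xs hXf).
by split.
Qed.
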